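(* Let $A$ be a finite nonempty alphabet and $\zeta:A^\omega\to A^\omega$ a bijective $\omega$-sequential function. Then $\zeta^{-1}$ is a bijective $\omega$-sequential function.
   Context: For an infinite word $z$, $z[0,n]$ is its prefix of length $n$. A map $\zeta:A^\omega\to A^\omega$ is $\omega$-sequential if whenever a finite word $u$ is a common prefix of $x$ and $y$, then $\zeta(x)[0,|u|]=\zeta(y)[0,|u|]$. *)

(* Defs.v *)
From mathcomp Require Import all_boot.
Set Implicit Arguments. Unset Strict Implicit. Unset Printing Implicit Defensive.

Definition omega_word (A : Type) := nat -> A.

Definition prefix (A : Type) (z : omega_word A) (n : nat) : seq A := mkseq z n.

Definition is_prefix (A : Type) (u : seq A) (x : omega_word A) : Prop :=
  prefix x (size u) = u.

Definition omega_sequential (A : Type) (zeta : omega_word A -> omega_word A) : Prop :=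
  forall (u : seq A) (x y : omega_word A),
    is_prefix u x -> is_prefix u y ->
    prefix (zeta x) (size u) = prefix (zeta y) (size u).

(* Main.v *)
Require Import Defs.
From mathcomp Require Import all_boot.
Local Notation prefix := Defs.prefix.

Lemma pre_eq (A : Type) (n : nat) (x y : omega_word A) :
  (forall i, i < n -> x i = y i) -> prefix x n = prefix y n.
Proof.
move=> H; rewrite /prefix /mkseq; apply/eq_in_map => i.
by rewrite mem_iota add0n => /andP[_ /H].
Qed.

Lemma pre_pt (A : Type) (a0 : A) (n : nat) (x y : omega_word A) :
  prefix x n = prefix y n -> forall i, i < n -> x i = y i.
Proof.
by move=> H i Hi; rewrite -(nth_mkseq a0 x Hi) -(nth_mkseq a0 y Hi) -/(prefix x n) H.
Qed.

Lemma seqP (A : Type) (a0 : A) (zeta : omega_word A -> omega_word A) :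
  omega_sequential zeta -> forall n x y, (forall i, i < n -> x i = y i) ->
  forall i, i < n -> zeta x i = zeta y i.
Proof.
move=> Hs n x y H; apply: (@pre_pt A a0 n (zeta x) (zeta y)).
have := Hs (prefix x n) x y; rewrite /is_prefix size_mkseq; apply => //.
by apply: pre_eq => i Hi; rewrite H.
Qed.

Theorem lemma4p7 (A : finType) (a0 : A)
  (zeta : omega_word A -> omega_word A) :
  bijective zeta -> omega_sequential zeta ->
  forall zeta_inv : omega_word A -> omega_word A,
    cancel zeta zeta_inv -> cancel zeta_inv zeta ->
    bijective zeta_inv /\ omega_sequential zeta_inv.
Proof.
move=> _ Hs zi K1 K2; split; first by exists zeta.
move=> u x y Hx Hy; set n := size u.
have Hxy : forall i, i < n -> x i = y i.
  by apply: (@pre_pt A a0 n x y); rewrite Hx Hy.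
apply: pre_eq.
pose ext (t : {ffun 'I_n -> A}) : omega_word A :=
  fun k => if insub k is Some i then t i else a0.
pose fw (w : omega_word A) : {ffun 'I_n -> A} := [ffun i => w (val i)].
pose F t := fw (zeta (ext t)).
have extfw : forall w i, i < n -> ext (fw w) i = w i.
  by move=> w i Hi; rewrite /ext insubT /= ffunE.
have fwext : forall t, fw (ext t) = t.
  by move=> t; apply/ffunP => i; rewrite ffunE /ext valK.
have HF : forall w, F (fw w) = fw (zeta w).
  move=> w; apply/ffunP => i; rewrite !ffunE; apply: (@seqP A a0 zeta Hs n _ _ _ _ (ltn_ord i)) => k Hk; exact: extfw.

pose g t := fw (zi (ext t)).
have Fg : cancel g F.
  by move=> t; rewrite /g HF K2 fwext.
have ginj : injective g := can_inj Fg.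
have [h gh hg] := injF_bij ginj.
have Finj : injective F.
  move=> a b E; rewrite -(hg a) -(hg b); congr g.
  by rewrite -(Fg (h a)) -(Fg (h b)) !hg E.
have E : fw (zi x) = fw (zi y).
  apply: Finj; rewrite !HF !K2; apply/ffunP => i; rewrite !ffunE; exact: (Hxy _ (ltn_ord i)).
move=> i Hi; have := congr1 (fun t : {ffun 'I_n -> A} => t (Ordinal Hi)) E; by rewrite !ffunE.
Qed.
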